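(* The least fixed point $(T_\infty,P_\infty)$ of $\Gamma_{\mathscr{TP}}$ (the stage at which the sequence $(T_\alpha,P_\alpha)$ stabilizes) is consistent, i.e. $T_\infty^+\cap T_\infty^-=\emptyset$ and $P_\infty^+\cap P_\infty^-=\emptyset$, and (hence) sound, i.e. for every $\mathcal L$-sentence $\varphi$, either $(\mathbb N,T_\infty,P_\infty)\not\models_{SK}\varphi\vee\neg\varphi$ or $(\mathbb N,T_\infty,P_\infty)\not\models_{SK}\mathscr P(\varphi)$.
   Context: Language. Let $\mathcal L_{\mathbb N}$ be the language of first-order Peano arithmetic and $\mathcal L=\mathcal L_{\mathbb N}\cup\{\mathrm T,\mathrm P\}$ with unary predicates $\mathrm T,\mathrm P$. $\mathcal L$-formulas are in Tait style: literals are $s=t$, $s\neq t$, $\mathrm Tt$, $\neg\mathrm Tt$, $\mathrm Pt$, $\neg\mathrm Pt$; formulas are built from literals by $\wedge,\vee,\forall,\exists$; negation of an arbitrary formula is defined by De Morgan dualities with $\neg\neg\varphi:=\varphi$. A standard Gödel numbering is fixed; $\#e$ is the code of $e$, $\ulcorner e\urcorner$ the numeral of $\#e$, $\mathrm{val}(t)$ the value of a closed term $t$, $\dot\neg$ the primitive recursive function with $\dot\neg(\#\varphi)=\#\neg\varphi$; $\mathrm T\varphi,\mathrm P\varphi$ abbreviate $\mathrm T\ulcorner\varphi\urcorner,\mathrm P\ulcorner\varphi\urcorner$. Semantics. A partial model is $(\mathbb N,T,P)$ with $\mathbb N$ the standard model and $T=(T^+,T^-)$, $P=(P^+,P^-)$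 pairs of subsets of $\omega$. Strong Kleene satisfaction $\models_{SK}$: arithmetic literals evaluated in $\mathbb N$; $\mathrm Tt$ satisfied iff $\mathrm{val}(t)\in T^+$, $\neg\mathrm Tt$ iff $\mathrm{val}(t)\in T^-$, likewise for $\mathrm P$ with $P^\pm$; conjunction iff both, disjunction iff at least one, $\forall x\varphi(x)$ iff all numeral instances, $\exists x\varphi(x)$ iff some numeral instance. Base paradoxicality. $\mathrm{PA}[\mathrm{SK}]$ is the two-sided sequent calculus for Strong Kleene logic with identity in $\mathcal L$ (initial sequents $\varphi\Rightarrow\varphi$, cut, weakening, the rule from $\Gamma\Rightarrow\Delta,\varphi$ infer $\neg\varphi,\Gamma\Rightarrow\Delta$, usual rules for $\wedge,\vee,\forall,\exists$, reflexivity $\Rightarrow t=t$, replacement from $\Gamma\Rightarrow\Delta,\varphi(t)$ infer $\Gamma\Rightarrow\Delta,s\neq t,\varphi(s)$) plus the initial sequents of Peano arithmetic and the induction rule for all $\mathcal L$-formulas. A sentence $\varphi$ is base paradoxical iff $\mathrm{PA}[\mathrm{SK}]$ derives $\varphi\Leftrightarrow\neg\mathrm T\varphi$ and $\neg\varphi\Leftrightarrow\mathrm T\varphi$ ($\Leftrightarrow$ meaning both sequents). $B(x)$ is an $\mathcal L_{\mathbb N}$-formula defining in $\mathbb N$ the set of codes of base paradoxical sentences, and $\Pi(x):=B(x)\vee B(\dot\neg x)$. Jump and sequence. Let $\mathscr P(x)$ be the $\mathcal L$-formula which is the disjunction of: (1) $x$ codes a sentence and $\Pi(x)$; (2) $x$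 codes a sentence $\mathrm Tt$ ($t$ a closed term) and $\mathrm P(\mathrm{val}(t))$; (3) $x$ codes a sentence $\neg\mathrm Tt$ and $\mathrm P(\mathrm{val}(t))$; (4) $x$ codes a sentence $\psi\wedge\theta$ and $(\mathrm P\psi\wedge\mathrm P\theta)\vee(\mathrm T\psi\wedge\mathrm P\theta)\vee(\mathrm T\theta\wedge\mathrm P\psi)$; (5) $x$ codes a sentence $\psi\vee\theta$ and $(\mathrm P\psi\wedge\mathrm P\theta)\vee(\neg\mathrm T\psi\wedge\mathrm P\theta)\vee(\neg\mathrm T\theta\wedge\mathrm P\psi)$; (6) $x$ codes a sentence $\forall v\psi$ and $\exists y\,\mathrm P\psi(\dot y)\wedge\forall y(\mathrm P\psi(\dot y)\vee\mathrm T\psi(\dot y))$; (7) $x$ codes a sentence $\exists v\psi$ and $\exists y\,\mathrm P\psi(\dot y)\wedge\forall y(\mathrm P\psi(\dot y)\vee\neg\mathrm T\psi(\dot y))$; here $\psi(\dot y)$ is the code of the result of substituting the numeral of $y$ for $v$. Write $\mathscr P(\varphi)$ for $\mathscr P(\ulcorner\varphi\urcorner)$. Define $\Gamma_{\mathscr{TP}}(T,P)=\big((\{\#\varphi:(\mathbb N,T,P)\models_{SK}\varphi\},\{\#\varphi:(\mathbb N,T,P)\models_{SK}\neg\varphi\}),(\{\#\varphi:(\mathbb N,T,P)\models_{SK}\mathscr P(\varphi)\},\{\#\varphi:(\mathbb N,T,P)\models_{SK}\varphi\vee\neg\varphi\})\big)$, $\varphi$ ranging over $\mathcal L$-sentences.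 Define $(T_0,P_0)=((\emptyset,\emptyset),(\emptyset,\emptyset))$, $(T_{\beta+1},P_{\beta+1})=\Gamma_{\mathscr{TP}}(T_\beta,P_\beta)$, $(T_\lambda,P_\lambda)=\bigcup_{\beta<\lambda}(T_\beta,P_\beta)$ (componentwise union) for limit $\lambda$. This sequence reaches a fixed point $(T_\infty,P_\infty)=\Gamma_{\mathscr{TP}}(T_\infty,P_\infty)$. *)

(* Defs.v *)
From Stdlib Require Import Arith List.
Import ListNotations.

Inductive term : Type :=
| tvar  : nat -> term
| tzero : term
| tsucc : term -> term
| tplus : term -> term -> term
| tmult : term -> term -> term.

Inductive form : Type :=
| fEq  : term -> term -> form
| fNeq : term -> term -> form
| fT   : term -> form
| fNT  : term -> form
| fP   : term -> form
| fNP  : term -> form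
| fAnd : form -> form -> form
| fOr  : form -> form -> form
| fAll : form -> form
| fEx  : form -> form.

Fixpoint neg (phi : form) : form :=
  match phi with
  | fEq s t => fNeq s t
  | fNeq s t => fEq s t
  | fT t => fNT t
  | fNT t => fT t
  | fP t => fNP t
  | fNP t => fP t
  | fAnd a b => fOr (neg a) (neg b)
  | fOr a b => fAnd (neg a) (neg b)
  | fAll a => fEx (neg a)
  | fEx a => fAll (neg a)
  end.

Fixpoint tsubst (s : nat -> term) (t : term) : term :=
  match t with
  | tvar n => s n
  | tzero => tzero
  | tsucc u => tsucc (tsubst s u)
  | tplus u v => tplus (tsubst s u) (tsubst s v)
  | tmult u v => tmult (tsubst s u) (tsubst s v)
  end.

Definition tshift (t : term) : term := tsubst (fun n => tvar (S n)) t.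

Definition up (s : nat -> term) : nat -> term :=
  fun n => match n with 0 => tvar 0 | S k => tshift (s k) end.

Fixpoint fsubst (s : nat -> term) (phi : form) : form :=
  match phi with
  | fEq a b => fEq (tsubst s a) (tsubst s b)
  | fNeq a b => fNeq (tsubst s a) (tsubst s b)
  | fT a => fT (tsubst s a)
  | fNT a => fNT (tsubst s a)
  | fP a => fP (tsubst s a)
  | fNP a => fNP (tsubst s a)
  | fAnd a b => fAnd (fsubst s a) (fsubst s b)
  | fOr a b => fOr (fsubst s a) (fsubst s b)
  | fAll a => fAll (fsubst (up s) a)
  | fEx a => fEx (fsubst (up s) a)
  end.

(* shift all free variables up by one (makes index 0 fresh) *)
Definition fshift (phi : form) : form := fsubst (fun n => tvar (S n)) phi.

(* phi(t): substitute t for the variable bound by the outermost binder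
   (index 0), lowering the other free variables. *)
Definition inst (phi : form) (t : term) : form :=
  fsubst (fun n => match n with 0 => t | S k => tvar k end) phi.

Fixpoint tclosed (k : nat) (t : term) : Prop :=
  match t with
  | tvar n => n < k
  | tzero => True
  | tsucc u => tclosed k u
  | tplus u v | tmult u v => tclosed k u /\ tclosed k v
  end.

Fixpoint fclosed (k : nat) (phi : form) : Prop :=
  match phi with
  | fEq a b | fNeq a b => tclosed k a /\ tclosed k b
  | fT a | fNT a | fP a | fNP a => tclosed k a
  | fAnd a b | fOr a b => fclosed k a /\ fclosed k b
  | fAll a | fEx a => fclosed (S k) a
  end.

Definition closed_term (t : term) : Prop := tclosed 0 t.
Definition sentence (phi : form) : Prop := fclosed 0 phi.

Fixpoint num (n : nat) : term :=
  match n with 0 => tzero | S k => tsucc (num k) end.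

(* value of a term (variables read as 0; only used on closed terms) *)
Fixpoint val (t : term) : nat :=
  match t with
  | tvar _ => 0
  | tzero => 0
  | tsucc u => S (val u)
  | tplus u v => val u + val v
  | tmult u v => val u * val v
  end.

Definition cpair (m n : nat) : nat := (m + n) * (m + n + 1) / 2 + m.

Fixpoint tcode (t : term) : nat :=
  match t with
  | tvar n => cpair 0 n
  | tzero => cpair 1 0
  | tsucc u => cpair 2 (tcode u)
  | tplus u v => cpair 3 (cpair (tcode u) (tcode v))
  | tmult u v => cpair 4 (cpair (tcode u) (tcode v))
  end.

Fixpoint code (phi : form) : nat :=
  match phi with
  | fEq a b => cpair 5 (cpair (tcode a) (tcode b))
  | fNeq a b => cpair 6 (cpair (tcode a) (tcode b))
  | fT a => cpair 7 (tcode a)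
  | fNT a => cpair 8 (tcode a)
  | fP a => cpair 9 (tcode a)
  | fNP a => cpair 10 (tcode a)
  | fAnd a b => cpair 11 (cpair (code a) (code b))
  | fOr a b => cpair 12 (cpair (code a) (code b))
  | fAll a => cpair 13 (code a)
  | fEx a => cpair 14 (code a)
  end.

Definition quote (phi : form) : term := num (code phi).

Record pmodel : Type := PM {
  Tpos : nat -> Prop;  Tneg : nat -> Prop;
  Ppos : nat -> Prop;  Pneg : nat -> Prop }.

Inductive SK (M : pmodel) : form -> Prop :=
| SK_eq   s t : val s = val t -> SK M (fEq s t)
| SK_neq  s t : val s <> val t -> SK M (fNeq s t)
| SK_T    t : Tpos M (val t) -> SK M (fT t)
| SK_NT   t : Tneg M (val t) -> SK M (fNT t)
| SK_P    t : Ppos M (val t) -> SK M (fP t)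
| SK_NP   t : Pneg M (val t) -> SK M (fNP t)
| SK_and  a b : SK M a -> SK M b -> SK M (fAnd a b)
| SK_orl  a b : SK M a -> SK M (fOr a b)
| SK_orr  a b : SK M b -> SK M (fOr a b)
| SK_all  a : (forall n, SK M (inst a (num n))) -> SK M (fAll a)
| SK_ex   a n : SK M (inst a (num n)) -> SK M (fEx a).

Definition succ_sub : nat -> term :=
  fun n => match n with 0 => tsucc (tvar 0) | S k => tvar (S k) end.

Inductive PASK : list form -> list form -> Prop :=
| D_init  phi : PASK [phi] [phi]
| D_cut   G D phi : PASK G (phi :: D) -> PASK (phi :: G) D -> PASK G D
| D_weak  G D G' D' : PASK G D -> incl G G' -> incl D D' -> PASK G' D'
| D_neg   G D phi : PASK G (phi :: D) -> PASK (neg phi :: G) D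
| D_andL  G D a b : PASK (a :: b :: G) D -> PASK (fAnd a b :: G) D
| D_andR  G D a b : PASK G (a :: D) -> PASK G (b :: D) -> PASK G (fAnd a b :: D)
| D_orL   G D a b : PASK (a :: G) D -> PASK (b :: G) D -> PASK (fOr a b :: G) D
| D_orR   G D a b : PASK G (a :: b :: D) -> PASK G (fOr a b :: D)
| D_allL  G D a t : PASK (inst a t :: G) D -> PASK (fAll a :: G) D
| D_allR  G D a : PASK (map fshift G) (a :: map fshift D) -> PASK G (fAll a :: D)
| D_exL   G D a : PASK (a :: map fshift G) (map fshift D) -> PASK (fEx a :: G) D
| D_exR   G D a t : PASK G (inst a t :: D) -> PASK G (fEx a :: D)
| D_refl  t : PASK [] [fEq t t]
| D_repl  G D a s t : PASK G (inst a t :: D) -> PASK G (fNeq s t :: inst a s :: D)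
| D_PA1 t : PASK [fEq (tsucc t) tzero] []
| D_PA2 s t : PASK [fEq (tsucc s) (tsucc t)] [fEq s t]
| D_PA3 s : PASK [] [fEq (tplus s tzero) s]
| D_PA4 s t : PASK [] [fEq (tplus s (tsucc t)) (tsucc (tplus s t))]
| D_PA5 s : PASK [] [fEq (tmult s tzero) tzero]
| D_PA6 s t : PASK [] [fEq (tmult s (tsucc t)) (tplus (tmult s t) s)]
(* induction rule for all L-formulas (index 0 is the eigenvariable) *)
| D_ind G D a t :
    PASK (a :: map fshift G) (fsubst succ_sub a :: map fshift D) ->
    PASK (inst a tzero :: G) (inst a t :: D).

Definition equivPASK (a b : form) : Prop := PASK [a] [b] /\ PASK [b] [a].

Definition base_paradoxical (phi : form) : Prop :=
  sentence phi /\
  equivPASK phi (fNT (quote phi)) /\ equivPASK (neg phi) (fT (quote phi)).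

Definition Bset (n : nat) : Prop := exists phi, base_paradoxical phi /\ code phi = n.

(* ---------- SK truth condition of the formula scrP(n) in (N,T,P) ----------
   scrP contains T, P only positively/as the literals T, ~T, P, and its
   arithmetic parts (including Pi(x) = B(x) \/ B(neg x)) are bivalent. *)
Definition SatScrP (M : pmodel) (n : nat) : Prop :=
  (exists phi, sentence phi /\ n = code phi /\ (Bset n \/ Bset (code (neg phi))))
  \/ (exists t, closed_term t /\ n = code (fT t) /\ Ppos M (val t))
  \/ (exists t, closed_term t /\ n = code (fNT t) /\ Ppos M (val t))
  \/ (exists a b, sentence (fAnd a b) /\ n = code (fAnd a b) /\
        ((Ppos M (code a) /\ Ppos M (code b)) \/
         (Tpos M (code a) /\ Ppos M (code b)) \/
         (Tpos M (code b) /\ Ppos M (code a))))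
  \/ (exists a b, sentence (fOr a b) /\ n = code (fOr a b) /\
        ((Ppos M (code a) /\ Ppos M (code b)) \/
         (Tneg M (code a) /\ Ppos M (code b)) \/
         (Tneg M (code b) /\ Ppos M (code a))))
  \/ (exists a, sentence (fAll a) /\ n = code (fAll a) /\
        (exists y, Ppos M (code (inst a (num y)))) /\
        (forall y, Ppos M (code (inst a (num y))) \/ Tpos M (code (inst a (num y)))))
  \/ (exists a, sentence (fEx a) /\ n = code (fEx a) /\
        (exists y, Ppos M (code (inst a (num y)))) /\
        (forall y, Ppos M (code (inst a (num y))) \/ Tneg M (code (inst a (num y))))).

Definition GammaTP (M : pmodel) : pmodel := {|
  Tpos := fun n => exists phi, sentence phi /\ n = code phi /\ SK M phi;
  Tneg := fun n => exists phi, sentence phi /\ n = code phi /\ SK M (neg phi);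
  Ppos := fun n => exists phi, sentence phi /\ n = code phi /\ SatScrP M (code phi);
  Pneg := fun n => exists phi, sentence phi /\ n = code phi /\ SK M (fOr phi (neg phi)) |}.

Definition pm_le (M N : pmodel) : Prop :=
  (forall n, Tpos M n -> Tpos N n) /\ (forall n, Tneg M n -> Tneg N n) /\
  (forall n, Ppos M n -> Ppos N n) /\ (forall n, Pneg M n -> Pneg N n).

Definition pm_eq (M N : pmodel) : Prop := pm_le M N /\ pm_le N M.

Definition fixed_point (M : pmodel) : Prop := pm_eq (GammaTP M) M.

Definition least_fixed_point (M : pmodel) : Prop :=
  fixed_point M /\ forall N, fixed_point N -> pm_le M N.

(* Main.v *)
Require Import Defs.
From Stdlib Require Import Arith Lia List Classical.
Import ListNotations.

Definition Tri k := k * (k + 1) / 2.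

Lemma Tri_S k : Tri (S k) = Tri k + S k.
Proof.
  unfold Tri.
  replace (S k * (S k + 1)) with (k * (k+1) + S k * 2) by lia.
  rewrite Nat.div_add by lia. reflexivity.
Qed.

Lemma Tri_mono a b : a <= b -> Tri a <= Tri b.
Proof.
  induction 1; auto. rewrite Tri_S. lia.
Qed.

Lemma cpair_Tri m n : cpair m n = Tri (m + n) + m.
Proof. reflexivity. Qed.

Lemma cpair_inj m n m' n' : cpair m n = cpair m' n' -> m = m' /\ n = n'.
Proof.
  rewrite !cpair_Tri. intro H.
  assert (m + n = m' + n').
  { destruct (lt_eq_lt_dec (m+n) (m'+n')) as [[h|h]|h]; auto.
    - assert (Tri (S (m+n)) <= Tri (m'+n')) by (apply Tri_mono; lia).
      rewrite Tri_S in H0. lia.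
    - assert (Tri (S (m'+n')) <= Tri (m+n)) by (apply Tri_mono; lia).
      rewrite Tri_S in H0. lia. }
  rewrite H0 in H. lia.
Qed.

Lemma tcode_inj : forall t t', tcode t = tcode t' -> t = t'.
Proof.
  induction t; destruct t'; simpl; intro H; apply cpair_inj in H; destruct H as [H1 H2];
    try discriminate; try (f_equal; auto; fail).
  - apply cpair_inj in H2. destruct H2. f_equal; auto.
  - apply cpair_inj in H2. destruct H2. f_equal; auto.
Qed.

Lemma code_inj : forall p p', code p = code p' -> p = p'.
Proof.
  induction p; destruct p'; simpl; intro H; apply cpair_inj in H; destruct H as [H1 H2];
    try discriminate;
    try (apply cpair_inj in H2; destruct H2; f_equal; auto using tcode_inj; fail);
    try (f_equal; auto using tcode_inj; fail).
Qed.

Lemma neg_neg p : neg (neg p) = p.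
Proof. induction p; simpl; congruence. Qed.

Lemma neg_fsubst : forall p s, fsubst s (neg p) = neg (fsubst s p).
Proof. induction p; intros; simpl; congruence. Qed.

Lemma neg_inst a t : inst (neg a) t = neg (inst a t).
Proof. apply neg_fsubst. Qed.

Lemma val_num n : val (num n) = n.
Proof. induction n; simpl; auto. Qed.

Lemma tsubst_comp : forall t s u, tsubst u (tsubst s t) = tsubst (fun k => tsubst u (s k)) t.
Proof. induction t; intros; simpl; f_equal; auto. Qed.

Lemma tsubst_ext : forall t s s', (forall k, s k = s' k) -> tsubst s t = tsubst s' t.
Proof. induction t; intros; simpl; f_equal; auto. Qed.

Lemma up_ext s s' : (forall k, s k = s' k) -> forall k, up s k = up s' k.
Proof. intros H [|k]; simpl; auto. rewrite H; auto. Qed.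

Lemma fsubst_ext : forall p s s', (forall k, s k = s' k) -> fsubst s p = fsubst s' p.
Proof.
  induction p; intros; simpl; f_equal; auto using tsubst_ext; apply IHp; apply up_ext; auto.
Qed.

Lemma up_comp s u : forall k, tsubst (up u) (up s k) = up (fun k => tsubst u (s k)) k.
Proof.
  intros [|k]; simpl; auto. unfold tshift. rewrite !tsubst_comp. apply tsubst_ext.
  intro; simpl. reflexivity.
Qed.

Lemma fsubst_comp : forall p s u, fsubst u (fsubst s p) = fsubst (fun k => tsubst u (s k)) p.
Proof.
  induction p; intros; simpl; f_equal; auto using tsubst_comp;
    rewrite IHp; apply fsubst_ext; apply up_comp.
Qed.

Definition scons (n : nat) (r : nat -> nat) : nat -> nat :=
  fun k => match k with 0 => n | S j => r j end.

Fixpoint tv (r : nat -> nat) (t : term) : nat :=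
  match t with
  | tvar n => r n | tzero => 0 | tsucc u => S (tv r u)
  | tplus u v => tv r u + tv r v | tmult u v => tv r u * tv r v end.

Fixpoint Sat (X : pmodel) (r : nat -> nat) (p : form) : Prop :=
  match p with
  | fEq a b => tv r a = tv r b | fNeq a b => tv r a <> tv r b
  | fT a => Tpos X (tv r a) | fNT a => Tneg X (tv r a)
  | fP a => Ppos X (tv r a) | fNP a => Pneg X (tv r a)
  | fAnd a b => Sat X r a /\ Sat X r b | fOr a b => Sat X r a \/ Sat X r b
  | fAll a => forall n, Sat X (scons n r) a
  | fEx a => exists n, Sat X (scons n r) a end.

Lemma tv_ext : forall t r r', (forall k, r k = r' k) -> tv r t = tv r' t.
Proof. induction t; intros; simpl; auto. Qed.

Lemma tv_subst : forall t r s, tv r (tsubst s t) = tv (fun k => tv r (s k)) t.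
Proof. induction t; intros; simpl; auto. Qed.

Lemma val_tv : forall t, val t = tv (fun _ => 0) t.
Proof. induction t; simpl; auto. Qed.

Lemma Sat_ext : forall X p r r', (forall k, r k = r' k) -> (Sat X r p <-> Sat X r' p).
Proof.
  intros X p; induction p; intros r r' H; simpl;
    repeat match goal with |- context [tv r ?t] => rewrite (tv_ext t r r' H) end;
    try tauto.
  - rewrite (IHp1 r r' H), (IHp2 r r' H); tauto.
  - rewrite (IHp1 r r' H), (IHp2 r r' H); tauto.
  - split; intros H1 n; apply (IHp (scons n r) (scons n r')); auto;
      intros [|k]; simpl; auto.
  - split; intros [n H1]; exists n; apply (IHp (scons n r) (scons n r')) in H1 || apply (IHp (scons n r) (scons n r')); auto;
      intros [|k]; simpl; auto.
Qed.

Lemma Sat_subst : forall X p r s, Sat X r (fsubst s p) <-> Sat X (fun k => tv r (s k)) p.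
Proof.
  intros X p; induction p; intros r s; simpl; rewrite ?tv_subst; try tauto.
  - rewrite IHp1, IHp2; tauto.
  - rewrite IHp1, IHp2; tauto.
  - split; intros H n; specialize (H n); [rewrite IHp in H|rewrite IHp];
      (eapply Sat_ext; [|exact H]); intros [|k]; simpl; auto;
      unfold tshift; rewrite tv_subst; apply tv_ext; auto.
  - split; intros [n H]; exists n; [rewrite IHp in H|rewrite IHp];
      (eapply Sat_ext; [|exact H]); intros [|k]; simpl; auto;
      unfold tshift; rewrite tv_subst; apply tv_ext; auto.
Qed.

Lemma val_subst t s : val (tsubst s t) = tv (fun k => val (s k)) t.
Proof. rewrite val_tv, tv_subst. apply tv_ext. intro; rewrite val_tv; auto. Qed.

Definition isub (t : term) : nat -> term := fun n => match n with 0 => t | S k => tvar k end.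

Lemma tsubst_id : forall t, tsubst tvar t = t.
Proof. induction t; simpl; congruence. Qed.

Lemma env_inst n s : forall k,
  val (tsubst (fun n0 => match n0 with 0 => num n | S k0 => tvar k0 end) (up s k))
  = scons n (fun k => val (s k)) k.
Proof.
  intros [|k]; simpl; [apply val_num|]. unfold tshift. rewrite tsubst_comp. simpl.
  rewrite tsubst_id. reflexivity.
Qed.

Lemma SK_Sat_gen : forall X p s, SK X (fsubst s p) <-> Sat X (fun k => val (s k)) p.
Proof.
  intros X p; induction p; intros s; simpl.
  all: try (split; [intro H; inversion H; subst; rewrite <- !val_subst; auto
                   | intro H; constructor; rewrite !val_subst; auto]; fail).
  - split; [intro H; inversion H; subst; split; [apply IHp1|apply IHp2]; auto
           | intros [H1 H2]; constructor; [apply IHp1|apply IHp2]; auto].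
  - split; [intro H; inversion H; subst; [left; apply IHp1|right; apply IHp2]; auto
           | intros [H1|H1]; [apply SK_orl; apply IHp1|apply SK_orr; apply IHp2]; auto].
  - split.
    + intros H n. inversion H; subst. specialize (H1 n). unfold inst in H1.
      rewrite fsubst_comp, IHp in H1. eapply Sat_ext; [|exact H1].
      intro k; first [apply env_inst | symmetry; apply env_inst].
    + intros H. constructor. intro n. unfold inst. rewrite fsubst_comp, IHp.
      eapply Sat_ext; [|exact (H n)].
      intro k; first [apply env_inst | symmetry; apply env_inst].
  - split.
    + intros H. inversion H; subst. exists n. unfold inst in H1.
      rewrite fsubst_comp, IHp in H1. eapply Sat_ext; [|exact H1].
      intro k; first [apply env_inst | symmetry; apply env_inst].
    + intros [n H]. apply SK_ex with n. unfold inst. rewrite fsubst_comp, IHp.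
      eapply Sat_ext; [|exact H].
      intro k; first [apply env_inst | symmetry; apply env_inst].
Qed.


Lemma fsubst_id : forall p s, (forall k, s k = tvar k) -> fsubst s p = p.
Proof.
  induction p; intros s H; simpl; f_equal;
    try (rewrite (tsubst_ext _ s tvar H), tsubst_id; reflexivity);
    try (apply IHp; intros [|k]; simpl; auto; rewrite H; reflexivity); auto.
Qed.

Lemma SK_Sat X p : SK X p <-> Sat X (fun _ => 0) p.
Proof.
  rewrite <- (fsubst_id p tvar) at 1 by auto. rewrite SK_Sat_gen. apply Sat_ext. reflexivity.
Qed.

Definition cons_pm (X : pmodel) : Prop :=
  (forall n, ~ (Tpos X n /\ Tneg X n)) /\ (forall n, ~ (Ppos X n /\ Pneg X n)).

Lemma Sat_neg X (HX : cons_pm X) : forall p r, Sat X r p -> Sat X r (neg p) -> False.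
Proof.
  destruct HX as [H1 H2]. induction p; intros r A B; simpl in *;
    try (eapply H1; split; eauto; fail); try (eapply H2; split; eauto; fail); try tauto.
  - destruct A; destruct B; eauto.
  - destruct B; destruct A; eauto.
  - destruct B as [n B]; eauto.
  - destruct A as [n A]; eauto.
Qed.

Lemma Sat_inst X r a t : Sat X r (inst a t) <-> Sat X (scons (tv r t) r) a.
Proof. unfold inst. rewrite Sat_subst. apply Sat_ext. intros [|k]; reflexivity. Qed.

Lemma Sat_fshift X r n g : Sat X (scons n r) (fshift g) <-> Sat X r g.
Proof. unfold fshift. rewrite Sat_subst. apply Sat_ext. intros k; reflexivity. Qed.

Lemma Sat_succ X r m a : Sat X (scons m r) (fsubst succ_sub a) <-> Sat X (scons (S m) r) a.
Proof. rewrite Sat_subst. apply Sat_ext. intros [|k]; reflexivity. Qed.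

Lemma soundness X (HX : cons_pm X) : forall G D, PASK G D ->
  forall r, (forall g, In g G -> Sat X r g) -> exists d, In d D /\ Sat X r d.
Proof.
  induction 1; intros r HG.
  - exists phi. split; [left; auto|]. apply HG; left; auto.
  - destruct (IHPASK1 r HG) as [d [[<-|Hd] Hs]].
    + apply IHPASK2. intros g [<-|Hg]; auto.
    + exists d; auto.
  - destruct (IHPASK r) as [d [Hd Hs]]; eauto.
  - destruct (IHPASK r) as [d [[<-|Hd] Hs]]; [intros; apply HG; right; auto| |eauto].
    exfalso. eapply Sat_neg; eauto. apply HG; left; auto.
  - apply IHPASK. intros g [<-|[<-|Hg]].
    + apply (HG (fAnd a b)); left; auto.
    + apply (HG (fAnd a b)); left; auto.
    + apply HG; right; auto.
  - destruct (IHPASK1 r HG) as [d [[<-|Hd] Hs]]; [|exists d; split; [right|]; auto].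
    destruct (IHPASK2 r HG) as [d [[<-|Hd] Hs']]; [|exists d; split; [right|]; auto].
    exists (fAnd a b); split; [left|split]; auto.
  - assert (Sat X r (fOr a b)) as Hab by (apply HG; left; auto).
    destruct Hab as [Ha|Hb]; [apply IHPASK1|apply IHPASK2]; intros g [<-|Hg]; auto;
      apply HG; right; auto.
  - destruct (IHPASK r HG) as [d [[<-|[<-|Hd]] Hs]].
    + exists (fOr a b); split; [left|left]; auto.
    + exists (fOr a b); split; [left|right]; auto.
    + exists d; split; [right|]; auto.
  - apply IHPASK. intros g [<-|Hg]; [|apply HG; right; auto].
    apply Sat_inst. apply (HG (fAll a)); left; auto.
  - destruct (classic (exists d, In d D /\ Sat X r d)) as [[d [Hd Hs]]|Hn].
    + exists d; split; [right|]; auto.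
    + exists (fAll a); split; [left; auto|]. intro n.
      destruct (IHPASK (scons n r)) as [d [[<-|Hd] Hs]]; auto.
      * intros g Hg. apply in_map_iff in Hg. destruct Hg as [g' [<- Hg']].
        apply Sat_fshift. auto.
      * apply in_map_iff in Hd. destruct Hd as [d' [<- Hd']].
        apply Sat_fshift in Hs. exfalso; eauto.
  - assert (Sat X r (fEx a)) as [n Ha] by (apply HG; left; auto).
    destruct (IHPASK (scons n r)) as [d [Hd Hs]].
    + intros g [<-|Hg]; auto. apply in_map_iff in Hg. destruct Hg as [g' [<- Hg']].
      apply Sat_fshift. apply HG; right; auto.
    + apply in_map_iff in Hd. destruct Hd as [d' [<- Hd']].
      apply Sat_fshift in Hs. eauto.
  - destruct (IHPASK r HG) as [d [[<-|Hd] Hs]]; [|exists d; split; [right|]; auto].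
    exists (fEx a); split; [left; auto|]. exists (tv r t). apply Sat_inst; auto.
  - exists (fEq t t); split; [left|]; simpl; auto.
  - destruct (IHPASK r HG) as [d [[<-|Hd] Hs]]; [|exists d; split; [right; right|]; auto].
    destruct (Nat.eq_dec (tv r s) (tv r t)) as [e|e].
    + exists (inst a s); split; [right; left; auto|]. apply Sat_inst. rewrite e.
      apply Sat_inst; auto.
    + exists (fNeq s t); split; [left|]; auto.
  - exfalso. specialize (HG _ (or_introl eq_refl)). simpl in HG. discriminate.
  - exists (fEq s t). split; [left; auto|]. specialize (HG _ (or_introl eq_refl)).
    simpl in *. congruence.
  - exists (fEq (tplus s tzero) s); split; [left|]; simpl; auto.
  - exists (fEq (tplus s (tsucc t)) (tsucc (tplus s t))); split; [left|]; simpl; auto.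
  - exists (fEq (tmult s tzero) tzero); split; [left|]; simpl; auto.
  - exists (fEq (tmult s (tsucc t)) (tplus (tmult s t) s)); split; [left; auto|]; simpl; lia.
  - assert (Hind : forall m, Sat X (scons m r) a \/ exists d, In d D /\ Sat X r d).
    { induction m.
      - left. apply Sat_inst with (t := tzero). apply HG; left; auto.
      - destruct IHm as [Hm|Hm]; [|right; auto].
        destruct (IHPASK (scons m r)) as [d [[<-|Hd] Hs]].
        + intros g [<-|Hg]; auto. apply in_map_iff in Hg. destruct Hg as [g' [<- Hg']].
          apply Sat_fshift. apply HG; right; auto.
        + left. apply Sat_succ; auto.
        + apply in_map_iff in Hd. destruct Hd as [d' [<- Hd']].
          apply Sat_fshift in Hs. right; eauto. }
    destruct (Hind (tv r t)) as [H1|[d [Hd Hs]]].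
    + exists (inst a t); split; [left; auto|]. apply Sat_inst; auto.
    + exists d; split; [right|]; auto.
Qed.

Lemma pm_le_refl X : pm_le X X.
Proof. repeat split; auto. Qed.

Lemma pm_le_trans X Y Z : pm_le X Y -> pm_le Y Z -> pm_le X Z.
Proof. intros [a [b [c d]]] [e [f [g h]]]; repeat split; auto. Qed.

Lemma SK_mono X Y : pm_le X Y -> forall p, SK X p -> SK Y p.
Proof.
  intros [a [b [c d]]] p H; induction H.
  all: first [ apply SK_orl; now auto | apply SK_orr; now auto | apply SK_ex with n; now auto
             | constructor; now auto ].
Qed.

Lemma SatScrP_mono X Y : pm_le X Y -> forall n, SatScrP X n -> SatScrP Y n.
Proof.
  intros [a [b [c d]]] n H. unfold SatScrP in *.
  destruct H as [H|[H|[H|[H|[H|[H|H]]]]]].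
  - left; auto.
  - right; left. destruct H as [t [h1 [h2 h3]]]; eauto.
  - do 2 right; left. destruct H as [t [h1 [h2 h3]]]; eauto.
  - do 3 right; left. destruct H as [a0 [b0 [h1 [h2 h3]]]]. exists a0, b0.
    split; [exact h1|]; split; [exact h2|]. destruct h3 as [[u v]|[[u v]|[u v]]]; [left|right;left|right;right]; split; auto.
  - do 4 right; left. destruct H as [a0 [b0 [h1 [h2 h3]]]]. exists a0, b0.
    split; [exact h1|]; split; [exact h2|]. destruct h3 as [[u v]|[[u v]|[u v]]]; [left|right;left|right;right]; split; auto.
  - do 5 right; left. destruct H as [a0 [h1 [h2 [[y h3] h4]]]]. exists a0.
    split; [exact h1|]; split; [exact h2|]. split; [exists y; auto|]. intro z; destruct (h4 z); auto.
  - do 6 right. destruct H as [a0 [h1 [h2 [[y h3] h4]]]]. exists a0.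
    split; [exact h1|]; split; [exact h2|]. split; [exists y; auto|]. intro z; destruct (h4 z); auto.
Qed.

Lemma Gamma_mono X Y : pm_le X Y -> pm_le (GammaTP X) (GammaTP Y).
Proof.
  intros H. split; [|split; [|split]]; simpl; intros n [p [h1 [h2 h3]]]; exists p;
    (split; [exact h1|]); (split; [exact h2|]).
  - eapply SK_mono; eauto.
  - eapply SK_mono; eauto.
  - eapply SatScrP_mono; eauto.
  - eapply SK_mono; eauto.
Qed.

Definition Inv (X : pmodel) : Prop :=
  (forall n, ~ (Tpos X n /\ Tneg X n)) /\ (forall n, ~ (Ppos X n /\ Pneg X n)) /\
  (forall n, ~ (Ppos X n /\ Tpos X n)) /\ (forall n, ~ (Ppos X n /\ Tneg X n)).

Section Step.
Variable X : pmodel.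
Hypothesis HI : Inv X.
Hypothesis Hinf : pm_le X (GammaTP X).

Lemma Tp_SK p : Tpos X (code p) -> SK X p.
Proof.
  intro H. destruct Hinf as [a _]. destruct (a _ H) as [q [_ [e h]]].
  apply code_inj in e; subst; auto.
Qed.

Lemma Tn_SK p : Tneg X (code p) -> SK X (neg p).
Proof.
  intro H. destruct Hinf as [_ [a _]]. destruct (a _ H) as [q [_ [e h]]].
  apply code_inj in e; subst; auto.
Qed.

Lemma Pp_Sat p : Ppos X (code p) -> SatScrP X (code p).
Proof.
  intro H. destruct Hinf as [_ [_ [a _]]]. destruct (a _ H) as [q [_ [e h]]].
  apply code_inj in e; subst; auto.
Qed.

Lemma consX : cons_pm X.
Proof. destruct HI as [a [b _]]; split; auto. Qed.

Lemma SK_cons p : SK X p -> SK X (neg p) -> False.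
Proof.
  intros A B. apply SK_Sat in A. apply SK_Sat in B. exact (Sat_neg X consX p _ A B).
Qed.

Lemma BP p : base_paradoxical p -> SK X p \/ SK X (neg p) -> False.
Proof.
  intros [_ [[E1 _] [E2 _]]] [A|A].
  - apply SK_Sat in A.
    destruct (soundness X consX _ _ E1 (fun _ => 0)) as [d [[<-|[]] Hd]].
    { intros g [<-|[]]; auto. }
    simpl in Hd. rewrite <- val_tv in Hd. unfold quote in Hd. rewrite val_num in Hd.
    apply Tn_SK in Hd. apply SK_Sat in A. exact (SK_cons p A Hd).
  - apply SK_Sat in A.
    destruct (soundness X consX _ _ E2 (fun _ => 0)) as [d [[<-|[]] Hd]].
    { intros g [<-|[]]; auto. }
    simpl in Hd. rewrite <- val_tv in Hd. unfold quote in Hd. rewrite val_num in Hd.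
    apply Tp_SK in Hd. apply SK_Sat in A. rewrite <- (neg_neg p) in Hd. exact (SK_cons _ A Hd).
Qed.

Lemma Case1 p : (SK X p \/ SK X (neg p)) ->
  (exists q, sentence q /\ code p = code q /\ (Bset (code p) \/ Bset (code (neg q)))) -> False.
Proof.
  intros Hs [q [_ [e [[c [Hc ec]]|[c [Hc ec]]]]]]; apply code_inj in e; subst q.
  - apply code_inj in ec; subst c. eapply BP; eauto.
  - apply code_inj in ec; subst c. eapply BP; eauto. rewrite neg_neg. tauto.
Qed.

Ltac ccons := match goal with A : SK X ?p, B : SK X (neg ?p) |- _ => exact (SK_cons p A B) end.

Ltac reskl := first [assumption | apply SK_orl; eassumption | apply SK_orr; eassumption
  | eapply SK_ex; eassumption | econstructor; eassumption].

Ltac scr H :=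
  destruct H as [H|[H|[H|[H|[H|[H|H]]]]]];
  [ eapply Case1; [|exact H]; try rewrite neg_neg; first [left; reskl | right; reskl]
  | destruct H as [t0 [_ [e h]]]
  | destruct H as [t0 [_ [e h]]]
  | destruct H as [a0 [b0 [_ [e h]]]]
  | destruct H as [a0 [b0 [_ [e h]]]]
  | destruct H as [a0 [_ [e [[y h] h']]]]
  | destruct H as [a0 [_ [e [[y h] h']]]] ];
  try (match goal with E : code _ = code _ |- _ => apply code_inj in E; try discriminate; injection E; intros; subst end).

Lemma G p : SK X p -> ~ SatScrP X (code p) /\ ~ SatScrP X (code (neg p)).
Proof.
  destruct HI as [I1 [I2 [I3 I4]]].
  induction 1; split; intro Hs.
  all: try (scr Hs; fail).
  all: scr Hs.
  all: try (eapply I3; split; eassumption).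
  all: try (eapply I4; split; eassumption).
  all: repeat match goal with IH : _ /\ _ |- _ => destruct IH end.
  all: try (destruct h as [[u v]|[[u v]|[u v]]];
        first [apply Pp_Sat in u; tauto | apply Pp_Sat in v; tauto
              | apply Tn_SK in u; ccons | apply Tp_SK in u; ccons]; fail).
  - apply Pp_Sat in h. destruct (H0 y); tauto.
  - rewrite neg_inst in h. apply Pp_Sat in h. destruct (H0 y); tauto.
  - destruct (h' n) as [u|u].
    + apply Pp_Sat in u; tauto.
    + apply Tn_SK in u. ccons.
  - destruct (h' n) as [u|u]; rewrite neg_inst in u.
    + apply Pp_Sat in u; tauto.
    + apply Tp_SK in u. ccons.
Qed.

Lemma step : Inv (GammaTP X).
Proof.
  repeat split; simpl.
  - intros n [[p [_ [e1 h1]]] [q [_ [e2 h2]]]]. subst. apply code_inj in e2; subst.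
    ccons.
  - intros n [[p [_ [e1 h1]]] [q [_ [e2 h2]]]]. subst. apply code_inj in e2; subst.
    inversion h2; subst.
    + apply (proj1 (G _ H0)); auto.
    + apply (proj2 (G _ H0)); rewrite neg_neg; auto.
  - intros n [[p [_ [e1 h1]]] [q [_ [e2 h2]]]]. subst. apply code_inj in e2; subst.
    apply (proj1 (G _ h2)); auto.
  - intros n [[p [_ [e1 h1]]] [q [_ [e2 h2]]]]. subst. apply code_inj in e2; subst.
    apply (proj2 (G _ h2)); rewrite neg_neg; auto.
Qed.

End Step.

Definition Usup (S : pmodel -> Prop) : pmodel := {|
  Tpos := fun n => exists Y, S Y /\ Tpos Y n;
  Tneg := fun n => exists Y, S Y /\ Tneg Y n;
  Ppos := fun n => exists Y, S Y /\ Ppos Y n;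
  Pneg := fun n => exists Y, S Y /\ Pneg Y n |}.

Inductive Tower : pmodel -> Prop :=
| tw_step X : Tower X -> Tower (GammaTP X)
| tw_sup (S : pmodel -> Prop) : (forall Y, S Y -> Tower Y) -> Tower (Usup S).

Lemma Usup_ub S Y : S Y -> pm_le Y (Usup S).
Proof. intro H; repeat split; simpl; intros; eauto. Qed.

Lemma Usup_least S Z : (forall Y, S Y -> pm_le Y Z) -> pm_le (Usup S) Z.
Proof.
  intro H; repeat split; simpl; intros n [Y [HY h]]; destruct (H Y HY) as [a [b [c d]]]; auto.
Qed.

Lemma tower_infl X : Tower X -> pm_le X (GammaTP X).
Proof.
  induction 1.
  - apply Gamma_mono; auto.
  - apply Usup_least. intros Y HY. eapply pm_le_trans; [apply H0; auto|].
    apply Gamma_mono. apply Usup_ub; auto.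
Qed.

Definition lt X Y := pm_le X Y /\ ~ pm_le Y X.
Definition extreme c := forall x, Tower x -> lt x c -> pm_le (GammaTP x) c.

Lemma lemma1 c : extreme c -> forall x, Tower x -> pm_le x c \/ pm_le (GammaTP c) x.
Proof.
  intros Ec x Tx. induction Tx as [y Ty IH|S HS IH].
  - destruct IH as [h|h].
    + destruct (classic (pm_le c y)) as [h'|h'].
      * right. apply Gamma_mono; auto.
      * left. apply Ec; auto. split; auto.
    + right. eapply pm_le_trans; [exact h|]. apply tower_infl; auto.
  - destruct (classic (exists y, S y /\ pm_le (GammaTP c) y)) as [[y [Sy h]]|h].
    + right. eapply pm_le_trans; [exact h|]. apply Usup_ub; auto.
    + left. apply Usup_least. intros Y HY. destruct (IH Y HY) as [h'|h']; auto.
      exfalso; eauto.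
Qed.

Lemma lemma2 c : Tower c -> extreme c.
Proof.
  induction 1 as [d Td IH|S HS IH]; intros x Tx [h1 h2].
  - destruct (lemma1 d IH x Tx) as [h|h]; [|contradiction].
    destruct (classic (pm_le d x)) as [h'|h'].
    + apply Gamma_mono; auto.
    + eapply pm_le_trans; [apply IH; auto; split; auto|]. apply tower_infl; auto.
  - destruct (classic (exists d, S d /\ ~ pm_le (GammaTP d) x)) as [[d [Sd hd]]|hn].
    + destruct (lemma1 d (IH d Sd) x Tx) as [h|h]; [|contradiction].
      destruct (classic (pm_le d x)) as [h'|h'].
      * destruct (classic (exists d', S d' /\ pm_le (GammaTP d) d')) as [[d' [Sd' hd']]|hn'].
        -- eapply pm_le_trans; [apply Gamma_mono; exact h|].
           eapply pm_le_trans; [exact hd'|]. apply Usup_ub; auto.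
        -- exfalso. apply h2. eapply pm_le_trans; [|exact h'].
           apply Usup_least. intros Y HY.
           destruct (lemma1 d (IH d Sd) Y (HS Y HY)) as [u|u]; auto.
           exfalso; eauto.
      * eapply pm_le_trans; [apply (IH d Sd); auto; split; auto|]. apply Usup_ub; auto.
    + exfalso. apply h2. apply Usup_least. intros Y HY.
      destruct (classic (pm_le (GammaTP Y) x)) as [u|u]; [|exfalso; eauto].
      eapply pm_le_trans; [apply tower_infl; auto|exact u].
Qed.

Lemma chain x c : Tower x -> Tower c -> pm_le x c \/ pm_le c x.
Proof.
  intros Tx Tc. destruct (lemma1 c (lemma2 c Tc) x Tx) as [h|h]; auto.
  right. eapply pm_le_trans; [apply tower_infl; auto|exact h].
Qed.

Lemma tower_inv X : Tower X -> Inv X.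
Proof.
  induction 1 as [X TX IH|S HS IH].
  - apply step; auto. apply tower_infl; auto.
  - assert (K : forall Y1 Y2, S Y1 -> S Y2 -> exists Z, S Z /\ pm_le Y1 Z /\ pm_le Y2 Z).
    { intros Y1 Y2 h1 h2. destruct (chain Y1 Y2 (HS _ h1) (HS _ h2)) as [u|u].
      - exists Y2; split; auto; split; auto. apply pm_le_refl.
      - exists Y1; split; auto; split; auto. apply pm_le_refl. }
    repeat split; simpl; intros n [[Y1 [h1 a1]] [Y2 [h2 a2]]];
      destruct (K Y1 Y2 h1 h2) as [Z [hz [[b1 [c1 [d1 e1]]] [b2 [c2 [d2 e2]]]]]];
      destruct (IH Z hz) as [i1 [i2 [i3 i4]]];
      first [solve [apply (i1 n); split; auto] | solve [apply (i2 n); split; auto] | solve [apply (i3 n); split; auto] | solve [apply (i4 n); split; auto]].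
Qed.

Theorem mainTheorem8 (M : pmodel) :
  least_fixed_point M ->
  ((forall n, ~ (Tpos M n /\ Tneg M n)) /\ (forall n, ~ (Ppos M n /\ Pneg M n))) /\
  (forall phi, sentence phi ->
     ~ SK M (fOr phi (neg phi)) \/ ~ SatScrP M (code phi)).
Proof.
  intros [FM LM].
  set (U := Usup Tower).
  assert (TU : Tower U) by (apply tw_sup; auto).
  assert (FU : fixed_point U).
  { split.
    - apply Usup_ub. apply tw_step; auto.
    - apply tower_infl; auto. }
  destruct (LM U FU) as [a [b [c d]]].
  destruct (tower_inv U TU) as [i1 [i2 [i3 i4]]].
  assert (C1 : forall n, ~ (Tpos M n /\ Tneg M n)).
  { intros n [h1 h2]. apply (i1 n); split; auto. }
  assert (C2 : forall n, ~ (Ppos M n /\ Pneg M n)).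
  { intros n [h1 h2]. apply (i2 n); split; auto. }
  split; [split; auto|].
  intros phi hs. apply NNPP. intro H. apply not_or_and in H. destruct H as [H1 H2].
  apply NNPP in H1. apply NNPP in H2.
  destruct FM as [[_ [_ [e f]]] _].
  apply (C2 (code phi)). split.
  - apply e. simpl. exists phi; auto.
  - apply f. simpl. exists phi; auto.
Qed.
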